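(* Let $p$ be a prime and $m$ a positive integer with $m+1\le p$. Let $B$ be a finite left brace with $(B,+)\cong(\mathbb{Z}/(p))^m$. Then for every nonzero $x\in B$ one has $o_{\cdot}(x)=o_{+}(x)=p$ (equivalently, the group $(B,\cdot)$ has exponent $p$).
   Context: A left brace is a set $B$ with two binary operations $+$ and $\cdot$ such that $(B,+)$ is an abelian group, $(B,\cdot)$ is a group, and $a\cdot(b+c)+a=a\cdot b+a\cdot c$ for all $a,b,c\in B$; the additive identity $0$ is also the multiplicative identity. $o_{\cdot}(x)$ and $o_{+}(x)$ denote the orders of $x$ in $(B,\cdot)$ and $(B,+)$ respectively. *)

(* Defs.v *)
From HB Require Import structures.
From mathcomp Require Import all_boot all_order all_algebra.
Set Implicit Arguments. Unset Strict Implicit. Unset Printing Implicit Defensive.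
Import GRing.Theory.
Local Open Scope ring_scope.

Definition is_left_brace (B : finZmodType) (mul : B -> B -> B) : Prop :=
  [/\ associative mul,
      (forall a, mul 0 a = a /\ mul a 0 = a),
      (forall a, exists b, mul b a = 0 /\ mul a b = 0)
    & (forall a b c, mul a (b + c) + a = mul a b + mul a c)].

Definition mpow (B : finZmodType) (mul : B -> B -> B) (x : B) (n : nat) : B :=
  iter n (mul x) 0.

Definition mul_order_is (B : finZmodType) (mul : B -> B -> B) (x : B) (n : nat) : Prop :=
  (0 < n)%N /\ mpow mul x n = 0 /\
  (forall k, (0 < k)%N -> (k < n)%N -> mpow mul x k <> 0).

Definition add_order_is (B : finZmodType) (x : B) (n : nat) : Prop :=
  (0 < n)%N /\ x *+ n = 0 /\
  (forall k, (0 < k)%N -> (k < n)%N -> x *+ k <> 0).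

(* Main.v *)
Require Import Defs.
From HB Require Import structures.
From mathcomp Require Import all_boot all_order all_algebra all_fingroup all_solvable.
Set Implicit Arguments. Unset Strict Implicit. Unset Printing Implicit Defensive.
Import GRing.Theory.
Local Open Scope ring_scope.

Section Brace.
Variables (B : finZmodType) (mul : B -> B -> B).
Hypotheses (mulA : associative mul) (mul0x : forall a, mul 0 a = a)
  (mulx0 : forall a, mul a 0 = a)
  (minv : forall a, exists b, mul b a = 0 /\ mul a b = 0)
  (bl : forall a b c, mul a (b + c) + a = mul a b + mul a c).

Lemma bmulI a : injective (mul a).
Proof.
move=> x y E; have [b [hb _]] := minv a.
by rewrite -(mul0x x) -(mul0x y) -hb -!mulA E.
Qed.

Definition bsig a : {perm B} := perm (@bmulI a).
Lemma bsigE a x : bsig a x = mul a x. Proof. by rewrite permE. Qed.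
Lemma bsig_inj : injective bsig.
Proof. by move=> a b E; rewrite -(mulx0 a) -(mulx0 b) -!bsigE E. Qed.
Lemma bsigM a b : (bsig a * bsig b)%g = bsig (mul b a).
Proof. by apply/permP => x; rewrite permM !bsigE mulA. Qed.
Lemma bsig1 : bsig 0 = 1%g.
Proof. by apply/permP => x; rewrite bsigE perm1 mul0x. Qed.

Definition bG := bsig @: [set: B].
Lemma bG_gs : group_set bG.
Proof.
apply/group_setP; split; first by apply/imsetP; exists 0; rewrite ?inE ?bsig1.
move=> u v /imsetP[a _ ->] /imsetP[b _ ->].
by rewrite bsigM; apply/imsetP; exists (mul b a); rewrite ?inE.
Qed.

Lemma bsigX a n : (bsig a ^+ n)%g = bsig (mpow mul a n).
Proof.
elim: n => [|n IH]; first by rewrite expg0 bsig1.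
by rewrite expgSr IH bsigM.
Qed.

Lemma mpow_card a : mpow mul a #|B| = 0.
Proof.
have Ga : bsig a \in Group bG_gs by apply/imsetP; exists a; rewrite ?inE.
have := expg_cardG Ga.
have -> : #|Group bG_gs| = #|B| by rewrite /= card_imset ?cardsT //; apply: bsig_inj.
by rewrite bsigX -bsig1 => /bsig_inj.
Qed.

Definition lam a b := mul a b - a.

Lemma mulN a c : mul a (- c) = a + a - mul a c.
Proof.
have := bl a c (- c); rewrite subrr mulx0 => ->.
by rewrite addrC addKr.
Qed.

Lemma lamD a u v : lam a (u + v) = lam a u + lam a v.
Proof.
rewrite /lam; have := bl a u v; move/(canRL (addrK a)) => ->.
by rewrite [RHS]addrA [mul a u - a + _]addrAC.

Qed.

Lemma lam0 b : lam 0 b = b.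
Proof. by rewrite /lam mul0x subr0. Qed.

Lemma lamM a c b : lam (mul a c) b = lam a (lam c b).
Proof.
rewrite /lam -mulA; have := bl a (mul c b) (- c); move/(canRL (addrK a)) => ->.
rewrite mulN. rewrite -!addrA; congr (_ + _).
by rewrite !addrA [a + a - _ - a]addrAC addrK addrAC subrr add0r.
Qed.

Lemma lam_pow a n b : lam (mpow mul a n) b = iter n (lam a) b.
Proof.
elim: n => [|n IH]; first by rewrite lam0.
by rewrite /mpow !iterS lamM -IH.
Qed.

Lemma mpowS a n : mpow mul a n.+1 = a + lam a (mpow mul a n).
Proof. by rewrite /lam addrC subrK. Qed.

Lemma mpow_period a k n j : mpow mul a k = 0 -> mpow mul a (n + j * k) = mpow mul a n.
Proof.
move=> hk; elim: j => [|j IH]; first by rewrite mul0n addn0.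
by rewrite mulSn addnCA addnC /mpow iterD -/(mpow mul a k) hk -/(mpow mul a (n + j * k)).
Qed.

End Brace.
Lemma Fp_val_nat p (c : 'F_p) : prime p -> c = (c : nat)%:R.
Proof.
move=> pP; apply: val_inj; rewrite /= val_Fp_nat // modn_small //.
have := ltn_ord c; move: (nat_of_ord c) => x; by rewrite Fp_cast.
Qed.

Lemma mx_of_add p n (g : 'rV['F_p]_n -> 'rV['F_p]_n) : prime p ->
  (forall u v, g (u + v) = g u + g v) -> exists M : 'M['F_p]_n, forall u, g u = u *m M.
Proof.
move=> pP gD.
have g0 : g 0 = 0 by apply: (addrI (g 0)); rewrite -gD !addr0.
have gMn : forall u k, g (u *+ k) = g u *+ k.
  by move=> u; elim=> [|k IH]; rewrite ?mulr0n ?g0 // !mulrS gD IH.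
have gZ : forall (c : 'F_p) u, g (c *: u) = c *: g u.
  by move=> c u; rewrite (Fp_val_nat c pP) !scaler_nat gMn.
exists (\matrix_(i, j) g (delta_mx 0 i) 0 j) => u.
have E := row_sum_delta u; rewrite [in LHS]E [in RHS]E mulmx_suml.
rewrite (big_morph g gD g0); apply: eq_bigr => j _.
rewrite gZ -scalemxAl; congr (_ *: _).
by apply/rowP => k; rewrite -rowE !mxE.
Qed.

Lemma pow_pchar_minus1 (R : comNzRingType) q : [pchar R].-nat q -> (-1 : R) ^+ q = -1.
Proof.
move=> hq; have := exprDn_pchar (1 : R) (-1) hq.
rewrite subrr expr1n expr0n.
have -> : (q == 0)%N = false by case: q hq => //.
rewrite mulr0n => /esym /(canRL (addKr 1)); by rewrite addr0.
Qed.

Lemma XsubX1 p k : prime p ->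
  ('X - 1 : {poly 'F_p}) ^+ (p ^ k) = 'X ^+ (p ^ k) - 1.
Proof.
move=> pP.
have hc : [pchar {poly 'F_p}].-nat (p ^ k)%N.
  have cp : p \in [pchar {poly 'F_p}] by rewrite pchar_poly pchar_Fp.
  by rewrite (eq_pnat _ (pcharf_eq cp)) pnatX pnat_id.
by rewrite exprDn_pchar // pow_pchar_minus1.
Qed.

Lemma sumX p : prime p -> \sum_(i < p) ('X : {poly 'F_p}) ^+ i = ('X - 1) ^+ p.-1.
Proof.
move=> pP; have p0 := prime_gt0 pP.
have nz : ('X - 1 : {poly 'F_p}) != 0 by rewrite -polyC1 polyXsubC_eq0.
apply: (mulfI nz); rewrite -subrX1 -exprS prednK //.
by have := XsubX1 1 pP; rewrite expn1 => ->.
Qed.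

Lemma nilp_bound (F : fieldType) n (N : 'M[F]_n.+1) k : N ^+ k = 0 -> N ^+ n.+1 = 0.
Proof.
move=> Nk.
have hd : mxminpoly N %| ('X - 0%:P) ^+ k.
  by apply: mxminpoly_min; rewrite subr0 rmorphXn /= horner_mx_X.
have /dvdp_exp_XsubCP [j jk E] := hd.
have Nj : N ^+ j = 0.
  have : mxminpoly N %| ('X - 0%:P) ^+ j by rewrite -(eqp_dvdr _ E) dvdpp.
  by move/mxminpoly_minP; rewrite subr0 rmorphXn /= horner_mx_X.
have jn : (j <= n.+1)%N.
  rewrite -ltnS -(size_exp_XsubC j (0:F)) -(eqp_size E).
  have := dvdp_leq (monic_neq0 (char_poly_monic N)) (mxminpoly_dvd_char N).
  by rewrite size_char_poly.
by rewrite -[X in N ^+ X](subnKC jn) exprD Nj mul0r.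
Qed.


Theorem lemma2p6 (p m : nat) (B : finZmodType) (mul : B -> B -> B)
  (f : B -> 'rV['F_p]_m) :
  prime p -> (0 < m)%N -> (m + 1 <= p)%N ->
  is_left_brace mul ->
  {morph f : x y / x + y} -> bijective f ->
  forall x : B, x != 0 -> mul_order_is mul x p /\ add_order_is x p.
Proof.
case: m f => [|m'] f pP m0; first by rewrite ltnn in m0.
move=> mp [mulA mul01 minv bl] fD fbij x x0.
have fbij' := fbij; case: fbij' => finv fK Kf.
have mul0x a : mul 0 a = a by case: (mul01 a).
have mulx0 a : mul a 0 = a by case: (mul01 a).
have f0 : f 0 = 0 by apply: (addrI (f 0)); rewrite -fD !addr0.
have finj : injective f := can_inj fK.
have fMn b k : f (b *+ k) = f b *+ k.
  by elim: k => [|k IH]; rewrite ?mulr0n ?f0 // !mulrS fD IH.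
have fx0 : f x != 0.
  by apply: contra x0 => /eqP h; apply/eqP; apply: finj; rewrite h f0.
have p1 := prime_gt1 pP.
have p0 := prime_gt0 pP.
split; last first.
  split; first exact: p0.
  split.
    by apply: finj; rewrite fMn f0 -scaler_nat pchar_Fp_0 // scale0r.
  move=> k k0 kp /(congr1 f); rewrite fMn f0 -scaler_nat => /eqP.
  rewrite scaler_eq0 (negPf fx0) orbF => /eqP.
  move/(congr1 val); rewrite /= val_Fp_nat // modn_small // => k0'.
  by rewrite k0' in k0.
pose g v := f (lam mul x (finv v)).
have finvD u v : finv (u + v) = finv u + finv v by apply: finj; rewrite fD !Kf.
have [M hM0] : exists M, forall u, g u = u *m M.
  by apply: (mx_of_add pP) => u v; rewrite /g finvD (lamD bl) fD.
have hM b : f (lam mul x b) = f b *m M by rewrite -hM0 /g fK.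
have hiter k b : f (iter k (lam mul x) b) = f b *m M ^+ k.
  elim: k => [|k IH]; first by rewrite expr0 mulmx1.
  by rewrite iterS hM IH -mulmxA exprSr mulmxE.
have cardB : #|B| = (p ^ m'.+1)%N.
  by rewrite (bij_eq_card fbij) card_mx card_Fp // mul1n.
have hpow (u : 'rV_(m'.+1)) : u *m M ^+ (p ^ m'.+1) = u.
  rewrite -{1}(Kf u) -cardB -hiter -(lam_pow mulA mul0x mulx0 bl).
  by rewrite (mpow_card mulA mul0x mulx0 minv) (lam0 mul0x) Kf.
have Mone : M ^+ (p ^ m'.+1) = 1.
  by apply/row_matrixP => i; rewrite !rowE hpow mulmx1.
have hsum n : f (mpow mul x n) = f x *m \sum_(i < n) M ^+ i.
  elim: n => [|k IH]; first by rewrite big_ord0 mulmx0 f0.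
  rewrite mpowS fD hM IH big_ord_recl expr0 mulmxDr mulmx1; congr (_ + _).
  rewrite -mulmxA mulmxE mulr_suml; congr (_ *m _).
  by apply: eq_bigr => i _; rewrite exprSr.
pose N := M - 1.
have NP : N ^+ (p ^ m'.+1) = 0.
  have := congr1 (horner_mx M) (XsubX1 m'.+1 pP).
  rewrite !(rmorphXn, rmorphB, rmorph1) /= horner_mx_X Mone subrr.
  by [].
have Nn : N ^+ m'.+1 = 0 := nilp_bound NP.
have Np : N ^+ p.-1 = 0.
  have le : (m'.+1 <= p.-1)%N by rewrite -ltnS prednK // -addn1.
  by rewrite -(subnKC le) exprD Nn mul0r.
have Sp : \sum_(i < p) M ^+ i = 0.
  have -> : \sum_(i < p) M ^+ i = horner_mx M (\sum_(i < p) 'X ^+ i).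
    by rewrite rmorph_sum; apply: eq_bigr => i _; rewrite rmorphXn /= horner_mx_X.
  by rewrite sumX // rmorphXn rmorphB rmorph1 /= horner_mx_X.
have hp : mpow mul x p = 0 by apply: finj; rewrite hsum Sp mulmx0 f0.
split; first exact: p0.
split; first exact: hp.
move=> k k0 kp hk.
have [u _ hu] := Bezoutl k p0.
have cop : coprime p k by rewrite prime_coprime // gtnNdvd.
move: hu; rewrite (eqP cop) => /dvdnP [c hc].
have e1 := mpow_period 1 u hk.
have e2 := mpow_period 0 c hp.
rewrite add0n in e2; move: e1; rewrite hc e2 /mpow /= mulx0 => e.
by rewrite -e eqxx in x0.
Qed.
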